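(* Assume (i) $\sigma<2\phi(0)$; (ii) $\beta<\frac{e^b+1}{2}\exp\!\left(-b-\frac{\sigma^2}{2}\right)$; (iii) $\delta_\beta<\delta^\ast$, where $\delta_\beta\in(0,b)$ is the unique solution of $\varphi(\delta_\beta)=\beta N$ and $\delta^\ast\in(\delta_{\mathrm{th}},b)$ is the unique solution of $\frac{\sigma}{\phi(\Phi^{-1}(q(\delta^\ast)))}\cdot\frac{e^b-e^{b-\delta^\ast}}{e^b-1}=1$; and (iv) $u\le Ne^{\sigma^2/2}+N\,\Phi\bigl(-d_1(\varphi(\delta^\ast),\delta^\ast)\bigr)(e^b-1)$. Then the Stackelberg game has a unique equilibrium, in which governance sets $\delta=\delta^\ast$ and the vault issues $F=\varphi(\delta^\ast)$ (and participates).
   Context: Parameters: $N>0$ (collateral value), $\sigma>0$ (collateral volatility), $b>0$ (outside return rate), $\beta>0$ (collateral factor), $u\in\mathbb{R}$ (vault's outside utility). $\Phi,\phi$ are the standard normal cdf and pdf. For $F>0$, $\delta\in\mathbb{R}$: $d_1(F,\delta)=\frac{\log(N/(Fe^\delta))+\sigma^2/2}{\sigma}$, $d_2=d_1-\sigma$, $P(F,\delta)=Fe^\delta\Phi(-d_2)-N\Phi(-d_1)$, and the vault objective $V(F,\delta)=Ne^{\sigma^2/2}+F(e^b-e^\delta)-(e^b-1)P(F,\delta)$. For $\delta\in(0,b)$: $q(\delta)=\frac{e^{b-\delta}-1}{e^b-1}$, $\varphi(\delta)=N\exp[\sigma\Phi^{-1}(q(\delta))-\delta-\sigma^2/2]$;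 $\delta_{\mathrm{th}}=b-\log\frac{e^b+1}{2}$. Stackelberg game: governance (leader) chooses an interest rate $\delta\in(0,b)$; the vault (follower) then chooses issuance $F$ maximizing $V(F,\delta)$ subject to the leverage constraint $0\le F\le\beta N$ and the participation constraint $V(F,\delta)\ge u$ (if no feasible $F$ satisfies the participation constraint, the vault does not participate, $F=0$). Governance's payoff is $F(e^\delta-1)$, with $F$ the vault's response; governance maximizes this anticipating the vault's response. *)

(* Defs.v *)
From Stdlib Require Import Reals Lra ClassicalEpsilon.
From Coquelicot Require Import Coquelicot.
Open Scope R_scope.

Definition npdf (x : R) : R := exp (- x ^ 2 / 2) / sqrt (2 * PI).

Definition ncdf (x : R) : R := RInt_gen npdf (Rbar_locally m_infty) (at_point x).

(* inverse of the standard normal cdf (meaningful for p in (0,1)) *)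
Definition ncdf_inv (p : R) : R := epsilon (inhabits 0) (fun x => ncdf x = p).

Section Model.
Variables (N sigma b : R).

Definition d_one (F delta : R) : R :=
  (ln (N / (F * exp delta)) + sigma ^ 2 / 2) / sigma.
Definition d_two (F delta : R) : R := d_one F delta - sigma.

(* put value; for F <= 0 (only F = 0 is relevant) it is the limit value 0 *)
Definition Put (F delta : R) : R :=
  if Rlt_dec 0 F then
    F * exp delta * ncdf (- d_two F delta) - N * ncdf (- d_one F delta)
  else 0.

Definition Vobj (F delta : R) : R :=
  N * exp (sigma ^ 2 / 2) + F * (exp b - exp delta) - (exp b - 1) * Put F delta.

Definition qf (delta : R) : R := (exp (b - delta) - 1) / (exp b - 1).

Definition varphi (delta : R) : R :=
  N * exp (sigma * ncdf_inv (qf delta) - delta - sigma ^ 2 / 2).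

Definition delta_th : R := b - ln ((exp b + 1) / 2).

Variables (beta u : R).

Definition feasible (delta F : R) : Prop :=
  0 <= F <= beta * N /\ u <= Vobj F delta.

Definition vault_best_response (delta F : R) : Prop :=
  (feasible delta F /\ forall F', feasible delta F' -> Vobj F' delta <= Vobj F delta)
  \/ ((forall F', ~ feasible delta F') /\ F = 0).

Definition gov_payoff (delta F : R) : R := F * (exp delta - 1).

(* Stackelberg (subgame-perfect) equilibrium: governance rate delta and
   vault strategy Fs (response to every admissible rate) *)
Definition stackelberg_eq (delta : R) (Fs : R -> R) : Prop :=
  0 < delta < b /\
  (forall d, 0 < d < b -> vault_best_response d (Fs d)) /\
  (forall d, 0 < d < b -> gov_payoff d (Fs d) <= gov_payoff delta (Fs delta)).

End Model.

(* Main.v *)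
Require Import Defs.
From Stdlib Require Import Reals Lra ClassicalEpsilon.
From Coquelicot Require Import Coquelicot.
Open Scope R_scope.

Definition gf (x : R) : R := exp (- (x * x)).
Definition Jg (x : R) : R := RInt gf 0 x.
Definition ff (u t : R) : R := exp (- (u * u) * (1 + t * t)) / (1 + t * t).
Definition hh (x : R) : R := RInt (ff x) 0 1 + Jg x * Jg x.

Lemma ex_derive_cont (f : R -> R) x : ex_derive f x -> continuous f x.
Proof. apply (@ex_derive_continuous R_AbsRing R_NormedModule). Qed.

Lemma is_derive_val (f : R -> R) x l l' : is_derive f x l -> l = l' -> is_derive f x l'.
Proof. intros H E; subst; exact H. Qed.

Lemma exp_le_mono x y : x <= y -> exp x <= exp y.
Proof. intros H; destruct (Rle_lt_or_eq_dec _ _ H) as [H'|H']; [left; apply exp_increasing; auto|subst; lra]. Qed.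

Lemma gf_cont x : continuous gf x.
Proof. apply ex_derive_cont; unfold gf; auto_derive; auto. Qed.

Lemma ex_RInt_gf a b : ex_RInt gf a b.
Proof. apply (@ex_RInt_continuous R_CompleteNormedModule); intros; apply gf_cont. Qed.

Lemma Jg_deriv x : is_derive Jg x (gf x).
Proof.
  apply is_derive_RInt with 0.
  - apply filter_forall; intros; apply (@RInt_correct R_CompleteNormedModule), ex_RInt_gf.
  - apply gf_cont.
Qed.

Lemma tt_pos t : 0 < 1 + t * t.
Proof. nra. Qed.

Lemma ff_deriv u t : is_derive (fun z => ff z t) u (-2 * u * exp (- (u * u) * (1 + t * t))).
Proof.
  unfold ff. pose proof (tt_pos t). auto_derive; [auto|]. field. lra.
Qed.

Lemma exp_cont_pt y : continuity_pt exp y.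
Proof. apply derivable_continuous_pt, derivable_pt_exp. Qed.

Lemma dff_cont x t : continuity_2d_pt (fun u v => Derive (fun z => ff z v) u) x t.
Proof.
  apply continuity_2d_pt_ext with (fun u v => (-2 * u) * exp (- (u * u) * (1 + v * v))).
  { intros; symmetry; apply is_derive_unique, ff_deriv. }
  apply continuity_2d_pt_mult.
  - apply continuity_2d_pt_mult. apply continuity_2d_pt_const. apply continuity_2d_pt_id1.
  - apply continuity_1d_2d_pt_comp with (f := exp) (g := fun u v => - (u * u) * (1 + v * v)).
    + apply exp_cont_pt.
    + apply continuity_2d_pt_mult.
      * apply continuity_2d_pt_opp, continuity_2d_pt_mult; apply continuity_2d_pt_id1.
      * apply continuity_2d_pt_plus. apply continuity_2d_pt_const.
        apply continuity_2d_pt_mult; apply continuity_2d_pt_id2.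
Qed.

Lemma ff_cont x t : continuous (ff x) t.
Proof. apply ex_derive_cont; unfold ff; pose proof (tt_pos t); auto_derive; lra. Qed.

Lemma ex_RInt_ff x a b : ex_RInt (ff x) a b.
Proof. apply (@ex_RInt_continuous R_CompleteNormedModule); intros; apply ff_cont. Qed.

Lemma RInt_dff x :
  RInt (fun t => Derive (fun u => ff u t) x) 0 1 = -2 * gf x * Jg x.
Proof.
  rewrite (RInt_ext _ (fun t => scal (-2 * gf x) (scal x (gf (x * t + 0))))).
  2:{ intros t _. assert (E : Derive (fun u : R => ff u t) x = -2 * x * exp (- (x * x) * (1 + t * t))) by (apply is_derive_unique, ff_deriv). rewrite E.
      unfold scal; simpl; unfold mult; simpl. unfold gf.
      replace (- ((x * t + 0) * (x * t + 0))) with (- (x*x*(t*t))) by ring.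
      replace (- (x * x) * (1 + t * t)) with (- (x*x) + - (x*x*(t*t))) by ring.
      rewrite exp_plus. ring. }
  rewrite (@RInt_scal R_CompleteNormedModule).
  2:{ apply (@ex_RInt_continuous R_CompleteNormedModule); intros. apply ex_derive_cont.
      unfold gf, scal; simpl; unfold mult; simpl; auto_derive; auto. }
  rewrite (@RInt_comp_lin R_CompleteNormedModule).
  2:{ apply ex_RInt_gf. }
  unfold Jg. replace (x * 0 + 0) with 0 by ring. replace (x * 1 + 0) with x by ring.
  unfold scal; simpl; unfold mult; simpl. ring.
Qed.

Lemma hh_deriv x : is_derive hh x 0.
Proof.
  unfold hh.
  assert (H1 : is_derive (fun x0 => RInt (fun t => ff x0 t) 0 1) x
                 (RInt (fun t => Derive (fun u => ff u t) x) 0 1)).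
  { apply is_derive_RInt_param.
    - apply filter_forall; intros; eexists; apply ff_deriv.
    - intros; apply dff_cont.
    - apply filter_forall; intros; apply ex_RInt_ff. }
  rewrite RInt_dff in H1.
  pose proof (Jg_deriv x) as H2.
  assert (H3 := is_derive_mult Jg Jg x _ _ H2 H2 (fun a b => Rmult_comm a b)).
  assert (H4 := is_derive_plus _ _ x _ _ H1 H3).
  eapply is_derive_val; [exact H4|]. unfold plus, mult; simpl. unfold mult; simpl. ring.
Qed.

Lemma hh_const x : 0 < x -> hh x = hh 0.
Proof.
  intros Hx. symmetry. apply (@eq_is_derive R_NormedModule); [|lra].
  intros; apply hh_deriv.
Qed.

Lemma atan_deriv x : is_derive atan x (/ (1 + x ^ 2)).
Proof. apply is_derive_Reals, derivable_pt_lim_atan. Qed.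

Lemma hh0 : hh 0 = PI / 4.
Proof.
  unfold hh, Jg. rewrite RInt_point. unfold zero; simpl.
  rewrite (RInt_ext _ (fun t => / (1 + t ^ 2))).
  2:{ intros t _. unfold ff. change (exp (- (0 * 0) * (1 + t * t)) / (1 + t * t) = / (1 + t ^ 2)). replace (- (0 * 0) * (1 + t * t)) with 0 by ring.
      rewrite exp_0. field. pose proof (tt_pos t). nra. }
  rewrite (is_RInt_unique _ 0 1 (minus (atan 1) (atan 0))).
  - rewrite atan_1, atan_0. unfold minus, plus, opp; simpl. ring.
  - apply (@is_RInt_derive R_CompleteNormedModule).
    + intros; apply atan_deriv.
    + intros; apply ex_derive_cont. pose proof (tt_pos x). auto_derive. nra.
Qed.

Lemma RInt_ff_bounds x : 0 <= RInt (ff x) 0 1 <= exp (- (x * x)).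
Proof.
  split.
  - rewrite <- (RInt_point 0 (fun _ : R => 0)) at 1.
    replace (RInt (fun _ : R => 0) 0 0) with (RInt (fun _ : R => 0) 0 1).
    2:{ rewrite !RInt_const. unfold scal; simpl; unfold mult; simpl. ring. }
    apply RInt_le; [lra| |apply ex_RInt_ff|].
    + apply ex_RInt_const.
    + intros t _. unfold ff. pose proof (tt_pos t). apply Rlt_le, Rdiv_lt_0_compat; auto. apply exp_pos.
  - replace (exp (- (x*x))) with (RInt (fun _ => exp (- (x*x))) 0 1).
    2:{ rewrite RInt_const. unfold scal; simpl; unfold mult; simpl. ring. }
    apply RInt_le; [lra|apply ex_RInt_ff|apply ex_RInt_const|].
    intros t Ht. unfold ff. pose proof (tt_pos t).
    apply Rle_trans with (exp (- (x * x) * (1 + t * t))).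
    + unfold Rdiv. rewrite <- (Rmult_1_r (exp _)) at 2. apply Rmult_le_compat_l.
      apply Rlt_le, exp_pos. rewrite <- Rinv_1. apply Rinv_le_contravar; nra.
    + apply exp_le_mono. nra.
Qed.

Lemma RInt_ge0 (f : R -> R) a b : a <= b -> ex_RInt f a b ->
  (forall x, a < x < b -> 0 <= f x) -> 0 <= RInt f a b.
Proof.
  intros Hab Hf Hp.
  replace 0 with (RInt (fun _ => 0) a b).
  2:{ rewrite RInt_const. unfold scal; simpl; unfold mult; simpl. ring. }
  apply RInt_le; auto. apply ex_RInt_const.
Qed.

Lemma Jg_ge0 x : 0 <= x -> 0 <= Jg x.
Proof.
  intros; apply RInt_ge0; auto. apply ex_RInt_gf. intros; unfold gf; left; apply exp_pos.
Qed.

Lemma exp_neg_sq_bound x : exp (- (x * x)) <= / (1 + x * x).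
Proof.
  rewrite exp_Ropp. apply Rinv_le_contravar. nra. apply exp_ineq1_le.
Qed.

Lemma Jg_lim eps : 0 < eps -> exists M, 0 < M /\ forall x, M <= x -> Rabs (Jg x - sqrt PI / 2) < eps.
Proof.
  intros He.
  set (s := sqrt PI / 2).
  assert (Hs : 0 < s). { unfold s. pose proof PI_RGT_0. pose proof (sqrt_lt_R0 PI H). lra. }
  assert (Hss : s * s = PI / 4).
  { unfold s. replace (sqrt PI / 2 * (sqrt PI / 2)) with (sqrt PI * sqrt PI / 4) by field.
    rewrite sqrt_sqrt; [lra|]. pose proof PI_RGT_0; lra. }
  exists (/ (eps * s) + 1). split.
  { pose proof (Rinv_0_lt_compat (eps * s) ltac:(nra)). lra. }
  intros x Hx.
  assert (Hx0 : 0 < x). { pose proof (Rinv_0_lt_compat (eps * s) ltac:(nra)). lra. }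
  pose proof (hh_const x Hx0) as E. rewrite hh0 in E. unfold hh in E.
  pose proof (RInt_ff_bounds x) as [B1 B2].
  pose proof (exp_neg_sq_bound x) as B3.
  pose proof (Jg_ge0 x (Rlt_le _ _ Hx0)) as J0.
  set (I := RInt (ff x) 0 1) in *.
  set (J := Jg x) in *.
  assert (Hd : Rabs (J - s) * (J + s) = I).
  { rewrite Rabs_left1. nra. nra. }
  assert (HI : I < / x).
  { apply Rle_lt_trans with (/ (1 + x * x)). lra. apply Rinv_lt_contravar; nra. }
  assert (Hxe : / x < eps * s).
  { assert (H1 : / (eps * s) < x) by lra.
    apply Rinv_lt_contravar in H1; [|pose proof (Rinv_0_lt_compat (eps * s) ltac:(nra)); nra].
    rewrite Rinv_inv in H1. exact H1. }
  pose proof (Rabs_pos (J - s)).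
  nra.
Qed.

Lemma sqrt2PI_pos : 0 < sqrt (2 * PI).
Proof. apply sqrt_lt_R0. pose proof PI_RGT_0; lra. Qed.

Lemma npdf_pos x : 0 < npdf x.
Proof. unfold npdf. apply Rdiv_lt_0_compat. apply exp_pos. apply sqrt2PI_pos. Qed.

Lemma npdf_cont x : continuous npdf x.
Proof. apply ex_derive_cont. unfold npdf. pose proof sqrt2PI_pos. auto_derive. lra. Qed.

Lemma npdf_deriv x : is_derive npdf x (- x * npdf x).
Proof. unfold npdf. pose proof sqrt2PI_pos. auto_derive; [lra|]. simpl. unfold Rdiv. field. lra. Qed.

Lemma npdf_even x : npdf (- x) = npdf x.
Proof. unfold npdf. replace ((- x) ^ 2) with (x ^ 2) by ring. reflexivity. Qed.

Lemma ex_RInt_npdf a b : ex_RInt npdf a b.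
Proof. apply (@ex_RInt_continuous R_CompleteNormedModule); intros; apply npdf_cont. Qed.

Lemma RInt_npdf_Jg y : RInt npdf 0 y = Jg (y / sqrt 2) / sqrt PI.
Proof.
  set (u := / sqrt 2).
  assert (Hs2 : 0 < sqrt 2) by (apply sqrt_lt_R0; lra).
  assert (HsP : 0 < sqrt PI) by (apply sqrt_lt_R0; pose proof PI_RGT_0; lra).
  assert (Hs2P : sqrt (2 * PI) = sqrt 2 * sqrt PI).
  { apply sqrt_mult; pose proof PI_RGT_0; lra. }
  assert (Hu : sqrt 2 * u = 1) by (unfold u; field; lra).
  rewrite (RInt_ext _ (fun t => scal (/ sqrt PI) (scal u (gf (u * t + 0))))).
  2:{ intros t _. unfold scal; simpl; unfold mult; simpl. unfold npdf, gf.
      rewrite Hs2P. replace (- ((u * t + 0) * (u * t + 0))) with (- t ^ 2 / 2).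
      - unfold u. field. repeat split; lra.
      - replace ((u * t + 0) * (u * t + 0)) with (u * u * (t * t)) by ring.
        replace (u * u) with (/ 2). field.
        unfold u. rewrite <- Rinv_mult, sqrt_sqrt; lra. }
  rewrite (@RInt_scal R_CompleteNormedModule).
  2:{ apply (@ex_RInt_continuous R_CompleteNormedModule); intros. apply ex_derive_cont.
      unfold gf, scal; simpl; unfold mult; simpl; auto_derive; auto. }
  rewrite (@RInt_comp_lin R_CompleteNormedModule).
  2:{ apply ex_RInt_gf. }
  unfold Jg. replace (u * 0 + 0) with 0 by ring. replace (u * y + 0) with (y / sqrt 2) by (unfold u; field; lra).
  unfold scal; simpl; unfold mult; simpl. field. lra.
Qed.

Lemma RInt_npdf_sym0 a : RInt npdf 0 a = RInt npdf (- a) 0.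
Proof.
  assert (H := @RInt_comp_lin R_CompleteNormedModule npdf (-1) 0 a 0 (ex_RInt_npdf _ _)).
  rewrite (RInt_ext _ (fun y => opp (npdf y))) in H.
  2:{ intros. unfold scal, opp; simpl; unfold mult; simpl. replace (-1 * x + 0) with (- x) by ring.
      rewrite npdf_even. ring. }
  rewrite (@RInt_opp R_CompleteNormedModule) in H by apply ex_RInt_npdf.
  replace (-1 * a + 0) with (- a) in H by ring. replace (-1 * 0 + 0) with 0 in H by ring.
  rewrite <- (@opp_RInt_swap R_CompleteNormedModule) in H by apply ex_RInt_npdf.
  unfold opp in H; simpl in H. lra.
Qed.

Lemma RInt_npdf_sym a : RInt npdf a 0 = RInt npdf 0 (- a).
Proof. rewrite RInt_npdf_sym0, Ropp_involutive. reflexivity.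
Qed.

Lemma npdf_right_lim eps : 0 < eps -> exists M, 0 < M /\ forall y, M <= y -> Rabs (RInt npdf 0 y - 1 / 2) < eps.
Proof.
  intros He.
  assert (HsP : 0 < sqrt PI) by (apply sqrt_lt_R0; pose proof PI_RGT_0; lra).
  assert (Hs2 : 0 < sqrt 2) by (apply sqrt_lt_R0; lra).
  destruct (Jg_lim (eps * sqrt PI) ltac:(nra)) as [M [HM HJ]].
  exists (M * sqrt 2). split; [nra|]. intros y Hy.
  rewrite RInt_npdf_Jg.
  specialize (HJ (y / sqrt 2)).
  assert (M <= y / sqrt 2).
  { apply Rmult_le_reg_r with (sqrt 2); auto. unfold Rdiv. rewrite Rmult_assoc, Rinv_l; lra. }
  specialize (HJ H).
  replace (Jg (y / sqrt 2) / sqrt PI - 1 / 2) with ((Jg (y / sqrt 2) - sqrt PI / 2) / sqrt PI) by (field; lra).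
  unfold Rdiv. rewrite Rabs_mult, (Rabs_right (/ sqrt PI)).
  2:{ left; apply Rinv_0_lt_compat; auto. }
  apply Rmult_lt_reg_r with (sqrt PI); auto. rewrite Rmult_assoc, Rinv_l; lra.
Qed.

Lemma npdf_left_lim eps : 0 < eps -> exists M, 0 < M /\ forall a, a <= - M -> Rabs (RInt npdf a 0 - 1 / 2) < eps.
Proof.
  intros He. destruct (npdf_right_lim eps He) as [M [HM H]]. exists M; split; auto.
  intros a Ha. rewrite RInt_npdf_sym. apply H. lra.
Qed.

Lemma is_RInt_gen_left_half : is_RInt_gen npdf (Rbar_locally m_infty) (at_point 0) (1 / 2).
Proof.
  intros P [eps Heps].
  destruct (npdf_left_lim eps (cond_pos eps)) as [M [HM HL]].
  apply Filter_prod with (Q := fun a => a <= - M) (R := fun b => b = 0).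
  - exists (- M). intros x Hx. lra.
  - reflexivity.
  - intros a b Ha Hb. simpl. subst b. exists (RInt npdf a 0). split.
    + apply (@RInt_correct R_CompleteNormedModule), ex_RInt_npdf.
    + apply Heps. apply HL. exact Ha.
Qed.

Lemma ncdf_eq x : ncdf x = 1 / 2 + RInt npdf 0 x.
Proof.
  unfold ncdf. apply (@is_RInt_gen_unique R_CompleteNormedModule); [try typeclasses eauto..|].
  apply (is_RInt_gen_Chasles npdf 0 (1/2) (RInt npdf 0 x)).
  - apply is_RInt_gen_left_half.
  - apply is_RInt_gen_at_point. apply (@RInt_correct R_CompleteNormedModule), ex_RInt_npdf.
Qed.

Lemma mvt (f df : R -> R) a b : a < b -> (forall c, a <= c <= b -> is_derive f c (df c)) ->
  exists c, a < c < b /\ f b - f a = df c * (b - a).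
Proof.
  intros Hab Hd. destruct (MVT_cor2 f df a b Hab) as [c [E Hc]].
  - intros c Hc. apply is_derive_Reals, Hd, Hc.
  - exists c; auto.
Qed.

Lemma ncdf_deriv x : is_derive ncdf x (npdf x).
Proof.
  apply (is_derive_ext (fun x => 1 / 2 + RInt npdf 0 x)).
  { intros; symmetry; apply ncdf_eq. }
  eapply is_derive_val.
  - apply (is_derive_plus (fun _ => 1/2) (fun x => RInt npdf 0 x)).
    + apply is_derive_const.
    + apply is_derive_RInt with 0.
      * apply filter_forall; intros; apply (@RInt_correct R_CompleteNormedModule), ex_RInt_npdf.
      * apply npdf_cont.
  - unfold plus, zero; simpl. ring.
Qed.

Lemma ncdf_cont_pt x : continuity_pt ncdf x.
Proof.
  apply continuity_pt_filterlim. apply ex_derive_cont. eexists; apply ncdf_deriv.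
Qed.

Lemma ncdf_incr x y : x < y -> ncdf x < ncdf y.
Proof.
  intros H. destruct (mvt ncdf npdf x y H) as [c [Hc E]].
  - intros; apply ncdf_deriv.
  - pose proof (npdf_pos c). nra.
Qed.

Lemma ncdf_le x y : x <= y -> ncdf x <= ncdf y.
Proof. intros H; destruct (Rle_lt_or_eq_dec _ _ H); [left; apply ncdf_incr; auto|subst; lra]. Qed.

Lemma ncdf_inj x y : ncdf x = ncdf y -> x = y.
Proof.
  intros E. destruct (Rtotal_order x y) as [H|[H|H]]; auto;
  apply ncdf_incr in H; lra.
Qed.

Lemma ncdf_right_lim eps : 0 < eps -> exists M, forall y, M <= y -> 1 - eps < ncdf y.
Proof.
  intros He. destruct (npdf_right_lim eps He) as [M [HM H]]. exists M. intros y Hy.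
  specialize (H y Hy). rewrite ncdf_eq. apply Rabs_def2 in H. lra.
Qed.

Lemma ncdf_left_lim eps : 0 < eps -> exists M, forall a, a <= M -> ncdf a < eps.
Proof.
  intros He. destruct (npdf_left_lim eps He) as [M [HM H]]. exists (- M). intros a Ha.
  specialize (H a Ha). rewrite ncdf_eq.
  rewrite <- (@opp_RInt_swap R_CompleteNormedModule) by apply ex_RInt_npdf.
  apply Rabs_def2 in H. unfold opp; simpl. lra.
Qed.

Lemma Jg_le y : 0 <= y -> Jg y <= sqrt PI / 2.
Proof.
  intros Hy. set (s := sqrt PI / 2).
  assert (Hs : 0 < s). { unfold s. pose proof PI_RGT_0. pose proof (sqrt_lt_R0 PI H). lra. }
  assert (Hss : s * s = PI / 4).
  { unfold s. replace (sqrt PI / 2 * (sqrt PI / 2)) with (sqrt PI * sqrt PI / 4) by field.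
    rewrite sqrt_sqrt; [lra|]. pose proof PI_RGT_0; lra. }
  pose proof (Jg_ge0 y Hy).
  destruct (Rle_lt_or_eq_dec _ _ Hy) as [Hy'|Hy'].
  - pose proof (hh_const y Hy') as E. rewrite hh0 in E. unfold hh in E.
    pose proof (RInt_ff_bounds y) as [B1 B2]. nra.
  - subst. unfold Jg. rewrite RInt_point. unfold zero; simpl. lra.
Qed.

Lemma Jg_incr x y : x < y -> Jg x < Jg y.
Proof.
  intros H. destruct (mvt Jg gf x y H) as [c [Hc E]].
  - intros; apply Jg_deriv.
  - assert (0 < gf c) by (unfold gf; apply exp_pos). nra.
Qed.

Lemma RInt_npdf_lt_half z : RInt npdf 0 z < 1 / 2.
Proof.
  assert (HsP : 0 < sqrt PI) by (apply sqrt_lt_R0; pose proof PI_RGT_0; lra).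
  assert (Hs2 : 0 < sqrt 2) by (apply sqrt_lt_R0; lra).
  destruct (Rle_or_lt z 0) as [Hz|Hz].
  - rewrite <- (@opp_RInt_swap R_CompleteNormedModule) by apply ex_RInt_npdf.
    unfold opp; simpl.
    assert (0 <= RInt npdf z 0).
    { apply RInt_ge0; auto. apply ex_RInt_npdf. intros; left; apply npdf_pos. }
    lra.
  - rewrite RInt_npdf_Jg.
    assert (H0 : 0 < z / sqrt 2) by (apply Rdiv_lt_0_compat; auto).
    pose proof (Jg_incr (z / sqrt 2) (z / sqrt 2 + 1) ltac:(lra)).
    pose proof (Jg_le (z / sqrt 2 + 1) ltac:(lra)).
    apply Rmult_lt_reg_r with (sqrt PI); auto. unfold Rdiv at 1. rewrite Rmult_assoc, Rinv_l; lra.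
Qed.

Lemma ncdf_lt1 x : ncdf x < 1.
Proof. rewrite ncdf_eq. pose proof (RInt_npdf_lt_half x). lra. Qed.

Lemma ncdf_pos x : 0 < ncdf x.
Proof.
  rewrite ncdf_eq.
  rewrite <- (@opp_RInt_swap R_CompleteNormedModule) by apply ex_RInt_npdf.
  unfold opp; simpl. rewrite RInt_npdf_sym. pose proof (RInt_npdf_lt_half (- x)). lra.
Qed.

Lemma ncdf_surj p : 0 < p < 1 -> exists z, ncdf z = p.
Proof.
  intros Hp.
  destruct (ncdf_left_lim p ltac:(lra)) as [M1 H1].
  destruct (ncdf_right_lim (1 - p) ltac:(lra)) as [M2 H2].
  specialize (H1 M1 (Rle_refl _)). specialize (H2 M2 (Rle_refl _)).
  destruct (IVT_gen ncdf M1 M2 p) as [z [_ Hz]].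
  - intros x; apply ncdf_cont_pt.
  - split; [apply Rle_trans with (ncdf M1); [apply Rmin_l|lra] | apply Rle_trans with (ncdf M2); [lra|apply Rmax_r]].
  - exists z; auto.
Qed.

Lemma ncdf_inv_spec p : 0 < p < 1 -> ncdf (ncdf_inv p) = p.
Proof.
  intros Hp. unfold ncdf_inv. apply epsilon_spec. apply ncdf_surj; auto.
Qed.

Lemma ncdf_comp_deriv (g : R -> R) x dg : is_derive g x dg -> is_derive (fun y => ncdf (g y)) x (npdf (g x) * dg).
Proof.
  intros H. eapply is_derive_val.
  - apply (is_derive_comp ncdf g x _ _ (ncdf_deriv (g x)) H).
  - unfold scal; simpl; unfold mult; simpl; ring.
Qed.

Definition Pform (N sigma F d : R) : R :=
  F * exp d * ncdf (- d_two N sigma F d) - N * ncdf (- d_one N sigma F d).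
Definition Vform (N sigma b F d : R) : R :=
  N * exp (sigma ^ 2 / 2) + F * (exp b - exp d) - (exp b - 1) * Pform N sigma F d.

Lemma Vobj_pos N sigma b F d : 0 < F -> Vobj N sigma b F d = Vform N sigma b F d.
Proof. intros H. unfold Vobj, Vform, Put, Pform. destruct (Rlt_dec 0 F); [reflexivity|lra]. Qed.

Lemma Vobj_0 N sigma b d : Vobj N sigma b 0 d = N * exp (sigma ^ 2 / 2).
Proof. unfold Vobj, Put. destruct (Rlt_dec 0 0); [lra|]. ring. Qed.

Lemma d_one_deriv N sigma F d : 0 < N -> 0 < sigma -> 0 < F ->
  is_derive (fun y => - d_one N sigma y d) F (/ (F * sigma)).
Proof.
  intros HN Hs HF. unfold d_one.
  assert (0 < exp d) by apply exp_pos.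
  auto_derive.
  - repeat split; try apply Rdiv_lt_0_compat; nra.
  - field. repeat split; try lra; nra.
Qed.

Lemma d_two_deriv N sigma F d : 0 < N -> 0 < sigma -> 0 < F ->
  is_derive (fun y => - d_two N sigma y d) F (/ (F * sigma)).
Proof.
  intros HN Hs HF. unfold d_two, d_one.
  assert (0 < exp d) by apply exp_pos.
  auto_derive.
  - repeat split; try apply Rdiv_lt_0_compat; nra.
  - field. repeat split; try lra; nra.
Qed.

Lemma key_identity N sigma F d : 0 < N -> 0 < sigma -> 0 < F ->
  F * exp d * npdf (- d_two N sigma F d) = N * npdf (- d_one N sigma F d).
Proof.
  intros HN Hs HF. rewrite !npdf_even. unfold npdf, d_two, d_one.
  assert (He : 0 < exp d) by apply exp_pos.
  set (L := ln (N / (F * exp d))).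
  assert (HL : exp L = N / (F * exp d)) by (unfold L; apply exp_ln; apply Rdiv_lt_0_compat; nra).
  replace (- ((L + sigma ^ 2 / 2) / sigma - sigma) ^ 2 / 2)
    with (- ((L + sigma ^ 2 / 2) / sigma) ^ 2 / 2 + L) by (field; lra).
  rewrite exp_plus, HL. field. pose proof sqrt2PI_pos. repeat split; lra.
Qed.

Definition dV (N sigma b F d : R) : R :=
  exp b - exp d - (exp b - 1) * exp d * ncdf (- d_two N sigma F d).

Lemma Vform_deriv N sigma b F d : 0 < N -> 0 < sigma -> 0 < F ->
  is_derive (fun y => Vform N sigma b y d) F (dV N sigma b F d).
Proof.
  intros HN Hs HF. unfold Vform, Pform.
  pose proof (ncdf_comp_deriv _ _ _ (d_one_deriv N sigma F d HN Hs HF)) as D1.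
  pose proof (ncdf_comp_deriv _ _ _ (d_two_deriv N sigma F d HN Hs HF)) as D2.
  pose proof (key_identity N sigma F d HN Hs HF) as K.
  assert (D3 : is_derive (fun y => y * exp d * ncdf (- d_two N sigma y d)) F
                 (exp d * ncdf (- d_two N sigma F d) + F * exp d * (npdf (- d_two N sigma F d) * / (F * sigma)))).
  { eapply is_derive_val.
    - apply (is_derive_mult (fun y => y * exp d) (fun y => ncdf (- d_two N sigma y d))).
      + auto_derive; auto; ring.
      + exact D2.
      + intros; unfold mult; simpl; ring.
    - unfold plus, mult, scal, one; simpl; unfold mult; simpl. ring. }
  assert (D4 : is_derive (fun y => N * ncdf (- d_one N sigma y d)) F
                 (N * (npdf (- d_one N sigma F d) * / (F * sigma)))).
  { apply is_derive_scal. exact D1. }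
  eapply is_derive_val.
  - apply (is_derive_minus (fun y => N * exp (sigma ^ 2 / 2) + y * (exp b - exp d))
             (fun y => (exp b - 1) * (y * exp d * ncdf (- d_two N sigma y d) - N * ncdf (- d_one N sigma y d)))).
    + apply (is_derive_plus (fun _ => N * exp (sigma ^ 2 / 2)) (fun y => y * (exp b - exp d))).
      apply is_derive_const. auto_derive; auto; ring.
    + apply is_derive_scal. apply (is_derive_minus _ _ _ _ _ D3 D4).
  - unfold dV, minus, plus, opp, zero, one, scal; simpl; unfold mult, plus, opp; simpl.
    replace (N * (npdf (- d_one N sigma F d) * / (F * sigma))) with (F * exp d * (npdf (- d_two N sigma F d) * / (F * sigma))).
    + ring.
    + rewrite <- Rmult_assoc, K. ring.
Qed.

Lemma qf_range b d : 0 < d < b -> 0 < qf b d < 1.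
Proof.
  intros Hd. unfold qf.
  assert (H1 : 1 < exp (b - d)) by (rewrite <- exp_0; apply exp_increasing; lra).
  assert (H2 : exp (b - d) < exp b) by (apply exp_increasing; lra).
  split; [apply Rdiv_lt_0_compat; lra|]. apply Rmult_lt_reg_r with (exp b - 1); [lra|].
  unfold Rdiv. rewrite Rmult_assoc, Rinv_l; lra.
Qed.

Lemma qf_alg b d : 0 < b -> (exp b - 1) * exp d * qf b d = exp b - exp d.
Proof.
  intros Hb. unfold qf.
  assert (1 < exp b) by (rewrite <- exp_0; apply exp_increasing; lra).
  replace (exp b) with (exp (b - d) * exp d) at 3 by (rewrite <- exp_plus; f_equal; ring).
  field. lra.
Qed.

Lemma qf_decr b d1 d2 : 0 < b -> d1 < d2 -> qf b d2 < qf b d1.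
Proof.
  intros Hb H. unfold qf.
  assert (1 < exp b) by (rewrite <- exp_0; apply exp_increasing; lra).
  assert (exp (b - d2) < exp (b - d1)) by (apply exp_increasing; lra).
  apply Rmult_lt_compat_r; [apply Rinv_0_lt_compat; lra| lra].
Qed.

Lemma varphi_pos N sigma b d : 0 < N -> 0 < varphi N sigma b d.
Proof. intros; unfold varphi; apply Rmult_lt_0_compat; auto; apply exp_pos. Qed.

Lemma d_two_varphi N sigma b d : 0 < N -> 0 < sigma ->
  - d_two N sigma (varphi N sigma b d) d = ncdf_inv (qf b d).
Proof.
  intros HN Hs. unfold d_two, d_one, varphi.
  set (z := ncdf_inv (qf b d)).
  replace (N / (N * exp (sigma * z - d - sigma ^ 2 / 2) * exp d)) with (exp (- (sigma * z - sigma ^ 2 / 2))).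
  - rewrite ln_exp. field. lra.
  - rewrite exp_Ropp. replace (sigma * z - sigma ^ 2 / 2) with ((sigma * z - d - sigma ^ 2 / 2) + d) by ring.
    rewrite exp_plus. field. split; [apply Rgt_not_eq, exp_pos|]. split; [apply Rgt_not_eq, exp_pos|lra].
Qed.

Lemma md2_incr N sigma F G d : 0 < N -> 0 < sigma -> 0 < F -> F < G ->
  - d_two N sigma F d < - d_two N sigma G d.
Proof.
  intros HN Hs HF HG. unfold d_two, d_one.
  assert (He : 0 < exp d) by apply exp_pos.
  assert (ln (N / (G * exp d)) < ln (N / (F * exp d))).
  { apply ln_increasing. apply Rdiv_lt_0_compat; nra.
    unfold Rdiv. apply Rmult_lt_compat_l; auto. apply Rinv_lt_contravar; [repeat apply Rmult_lt_0_compat; lra| nra]. }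
  assert (H2 : (ln (N / (G * exp d)) + sigma ^ 2 / 2) / sigma < (ln (N / (F * exp d)) + sigma ^ 2 / 2) / sigma).
  { unfold Rdiv; apply Rmult_lt_compat_r; [apply Rinv_0_lt_compat; lra|lra]. }
  lra.
Qed.

Lemma dV_sign N sigma b d F : 0 < N -> 0 < sigma -> 0 < d < b -> 0 < F ->
  (F < varphi N sigma b d -> 0 < dV N sigma b F d) /\
  (varphi N sigma b d < F -> dV N sigma b F d < 0) /\
  (F <= varphi N sigma b d -> ncdf (- d_two N sigma F d) <= qf b d).
Proof.
  intros HN Hs Hd HF.
  pose proof (qf_range b d Hd) as Hq.
  pose proof (qf_alg b d ltac:(lra)) as Ha.
  pose proof (ncdf_inv_spec _ Hq) as Hz.
  pose proof (d_two_varphi N sigma b d HN Hs) as E.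
  assert (HB : 1 < exp b) by (rewrite <- exp_0; apply exp_increasing; lra).
  assert (Hc : 0 < exp d) by apply exp_pos.
  assert (HdV : dV N sigma b F d = (exp b - 1) * exp d * (qf b d - ncdf (- d_two N sigma F d))).
  { unfold dV. rewrite <- Ha. ring. }
  assert (Hk : 0 < (exp b - 1) * exp d) by nra.
  split; [|split].
  - intros H. pose proof (md2_incr N sigma F _ d HN Hs HF H) as H1. rewrite E in H1.
    apply ncdf_incr in H1. rewrite Hz in H1. rewrite HdV. nra.
  - intros H. pose proof (md2_incr N sigma _ F d HN Hs (varphi_pos N sigma b d HN) H) as H1. rewrite E in H1.
    apply ncdf_incr in H1. rewrite Hz in H1. rewrite HdV. nra.
  - intros H. destruct (Rle_lt_or_eq_dec _ _ H) as [H'|H'].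
    + pose proof (md2_incr N sigma F _ d HN Hs HF H') as H1. rewrite E in H1.
      apply ncdf_incr in H1. lra.
    + subst F. rewrite E, Hz. lra.
Qed.

Lemma V_incr N sigma b d F G : 0 < N -> 0 < sigma -> 0 < d < b -> 0 < F -> F < G -> G <= varphi N sigma b d ->
  Vobj N sigma b F d < Vobj N sigma b G d.
Proof.
  intros HN Hs Hd HF HFG HG.
  rewrite !Vobj_pos by lra.
  destruct (mvt (fun y => Vform N sigma b y d) (fun y => dV N sigma b y d) F G HFG) as [c [Hc E]].
  - intros c Hc. apply Vform_deriv; auto; lra.
  - assert (0 < dV N sigma b c d) by (apply (dV_sign N sigma b d c); auto; lra).
    simpl in E. nra.
Qed.

Lemma V_decr N sigma b d F G : 0 < N -> 0 < sigma -> 0 < d < b -> varphi N sigma b d <= F -> F < G ->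
  Vobj N sigma b G d < Vobj N sigma b F d.
Proof.
  intros HN Hs Hd HF HFG.
  pose proof (varphi_pos N sigma b d HN).
  rewrite !Vobj_pos by lra.
  destruct (mvt (fun y => Vform N sigma b y d) (fun y => dV N sigma b y d) F G HFG) as [c [Hc E]].
  - intros c Hc. apply Vform_deriv; auto; lra.
  - assert (dV N sigma b c d < 0) by (apply (dV_sign N sigma b d c); auto; lra).
    simpl in E. nra.
Qed.

Lemma V_ge_V0 N sigma b d F : 0 < N -> 0 < sigma -> 0 < d < b -> 0 < F -> F <= varphi N sigma b d ->
  Vobj N sigma b 0 d <= Vobj N sigma b F d.
Proof.
  intros HN Hs Hd HF HFp.
  rewrite Vobj_0, Vobj_pos by lra. unfold Vform, Pform.
  pose proof (proj2 (proj2 (dV_sign N sigma b d F HN Hs Hd HF)) HFp) as H1.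
  pose proof (qf_alg b d ltac:(lra)) as Ha.
  assert (HB : 1 < exp b) by (rewrite <- exp_0; apply exp_increasing; lra).
  assert (Hc : 0 < exp d) by apply exp_pos.
  pose proof (ncdf_pos (- d_one N sigma F d)).
  assert (Hk : 0 < (exp b - 1) * exp d * F) by (repeat apply Rmult_lt_0_compat; lra).
  assert (F * (exp b - exp d) = (exp b - 1) * exp d * F * qf b d) by (rewrite <- Ha; ring).
  assert (0 <= (exp b - 1) * exp d * F * (qf b d - ncdf (- d_two N sigma F d))) by (apply Rmult_le_pos; lra).
  assert (0 <= (exp b - 1) * (N * ncdf (- d_one N sigma F d))) by (apply Rmult_le_pos; nra).
  nra.
Qed.

Definition F0 (N sigma b beta d : R) : R := Rmin (varphi N sigma b d) (beta * N).

Lemma vault_opt N sigma b beta d F : 0 < N -> 0 < sigma -> 0 < beta -> 0 < d < b ->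
  0 <= F <= beta * N -> F <> F0 N sigma b beta d ->
  Vobj N sigma b F d < Vobj N sigma b (F0 N sigma b beta d) d.
Proof.
  intros HN Hs Hbeta Hd HF Hne.
  pose proof (varphi_pos N sigma b d HN) as Hp.
  assert (HbN : 0 < beta * N) by nra.
  unfold F0 in *.
  set (p := varphi N sigma b d) in *.
  assert (H0 : 0 < Rmin p (beta * N)) by (apply Rmin_glb_lt; auto).
  pose proof (Rmin_l p (beta * N)). pose proof (Rmin_r p (beta * N)).
  destruct (Rtotal_order F (Rmin p (beta * N))) as [Hlt|[Heq|Hgt]].
  - destruct (Rle_lt_or_eq_dec _ _ (proj1 HF)) as [HF0|HF0].
    + apply V_incr; auto; unfold p in *; lra.
    + subst F. apply Rle_lt_trans with (Vobj N sigma b (Rmin p (beta * N) / 2) d).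
      * apply V_ge_V0; auto; unfold p in *; lra.
      * apply V_incr; auto; unfold p in *; lra.
  - contradiction.
  - assert (Hm : Rmin p (beta * N) = p).
    { destruct (Rle_dec p (beta * N)) as [h|h]; [apply Rmin_left; auto | rewrite Rmin_right in Hgt; lra]. }
    rewrite Hm in *. apply V_decr; auto; unfold p in *; lra.
Qed.

Lemma is_derive_cR (c x : R) : is_derive (fun _ : R => c) x 0.
Proof. apply (@is_derive_const R_AbsRing R_NormedModule). Qed.

Definition mfun (sigma z : R) : R := sigma * (1 - ncdf z) - npdf z.
Definition Gz (sigma z : R) : R := exp (sigma * z) * (1 - ncdf z).

Lemma mfun_deriv sigma z : is_derive (mfun sigma) z ((z - sigma) * npdf z).
Proof.
  unfold mfun. eapply is_derive_val.
  - apply (is_derive_minus (fun z => sigma * (1 - ncdf z)) npdf).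
    + apply is_derive_scal. apply (is_derive_minus (fun _ => 1) ncdf).
      apply is_derive_cR. apply ncdf_deriv.
    + apply npdf_deriv.
  - unfold minus, plus, opp, zero; simpl. ring.
Qed.

Lemma Gz_deriv sigma z : is_derive (Gz sigma) z (exp (sigma * z) * mfun sigma z).
Proof.
  unfold Gz, mfun.
  assert (D1 : is_derive (fun z => exp (sigma * z)) z (sigma * exp (sigma * z))).
  { auto_derive; auto. ring. }
  assert (D2 : is_derive (fun z => 1 - ncdf z) z (0 - npdf z)).
  { apply (is_derive_minus (fun _ => 1) ncdf). apply is_derive_cR. apply ncdf_deriv. }
  eapply is_derive_val.
  - apply (is_derive_mult _ _ _ _ _ D1 D2). intros; unfold mult; simpl; ring.
  - unfold minus, plus, opp, zero, mult, one; simpl. unfold mult; simpl. ring.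
Qed.

Lemma mfun_incr sigma z w : sigma <= z -> z < w -> mfun sigma z < mfun sigma w.
Proof.
  intros H1 H2. destruct (mvt (mfun sigma) (fun z => (z - sigma) * npdf z) z w H2) as [c [Hc E]].
  - intros; apply mfun_deriv.
  - pose proof (npdf_pos c). assert (0 < (c - sigma) * npdf c) by (apply Rmult_lt_0_compat; lra). nra.
Qed.

Lemma mfun_decr sigma z w : z < w -> w <= sigma -> mfun sigma w < mfun sigma z.
Proof.
  intros H1 H2. destruct (mvt (mfun sigma) (fun z => (z - sigma) * npdf z) z w H1) as [c [Hc E]].
  - intros; apply mfun_deriv.
  - pose proof (npdf_pos c). assert ((c - sigma) * npdf c < 0).
    { assert (0 < (sigma - c) * npdf c) by (apply Rmult_lt_0_compat; lra). nra. }
    nra.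
Qed.

Lemma mfun_neg sigma z : 0 < sigma -> sigma <= z -> mfun sigma z < 0.
Proof.
  intros Hs Hz. destruct (Rlt_or_le (mfun sigma z) 0) as [H|H]; auto. exfalso.
  pose proof (mfun_incr sigma z (z + 1) Hz ltac:(lra)) as H1.
  set (eta := mfun sigma (z + 1)) in *.
  destruct (ncdf_right_lim (eta / sigma) ltac:(apply Rdiv_lt_0_compat; lra)) as [M HM].
  set (w := Rmax M (z + 2)).
  pose proof (mfun_incr sigma (z + 1) w ltac:(lra) ltac:(unfold w; pose proof (Rmax_r M (z+2)); lra)) as H2.
  specialize (HM w (Rmax_l _ _)).
  pose proof (npdf_pos w).
  change (eta < sigma * (1 - ncdf w) - npdf w) in H2.
  assert (sigma * (1 - ncdf w) < eta).
  { apply Rmult_lt_reg_l with (/ sigma). apply Rinv_0_lt_compat; lra.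
    rewrite <- Rmult_assoc, Rinv_l by lra. unfold Rdiv in HM. lra. }
  lra.
Qed.

Lemma Gz_unimodal sigma zs z : 0 < sigma -> mfun sigma zs = 0 -> z <> zs -> Gz sigma z < Gz sigma zs.
Proof.
  intros Hs Hm Hne.
  assert (Hzs : zs < sigma).
  { destruct (Rlt_or_le zs sigma) as [H|H]; auto. pose proof (mfun_neg sigma zs Hs H). lra. }
  destruct (Rtotal_order z zs) as [H|[H|H]]; [|contradiction|].
  - destruct (mvt (Gz sigma) (fun z => exp (sigma * z) * mfun sigma z) z zs H) as [c [Hc E]].
    + intros; apply Gz_deriv.
    + pose proof (mfun_decr sigma c zs (proj2 Hc) (Rlt_le _ _ Hzs)).
      pose proof (exp_pos (sigma * c)).
      assert (0 < exp (sigma * c) * mfun sigma c) by (apply Rmult_lt_0_compat; lra). nra.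
  - destruct (mvt (Gz sigma) (fun z => exp (sigma * z) * mfun sigma z) zs z H) as [c [Hc E]].
    + intros; apply Gz_deriv.
    + assert (mfun sigma c < 0).
      { destruct (Rlt_or_le c sigma) as [Hc'|Hc'].
        - pose proof (mfun_decr sigma zs c (proj1 Hc) (Rlt_le _ _ Hc')). lra.
        - apply mfun_neg; auto. }
      pose proof (exp_pos (sigma * c)).
      assert (exp (sigma * c) * mfun sigma c < 0).
      { assert (0 < exp (sigma * c) * (- mfun sigma c)) by (apply Rmult_lt_0_compat; lra). nra. }
      nra.
Qed.

Lemma payoff_Gz N sigma b d : 0 < d < b ->
  varphi N sigma b d * (exp d - 1) =
  (N * exp (- (sigma ^ 2 / 2)) * exp (- b) * (exp b - 1)) * Gz sigma (ncdf_inv (qf b d)).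
Proof.
  intros Hd. pose proof (ncdf_inv_spec _ (qf_range b d Hd)) as Hz.
  unfold Gz. rewrite Hz. unfold varphi, qf.
  set (z := ncdf_inv ((exp (b - d) - 1) / (exp b - 1))).
  assert (HB : 1 < exp b) by (rewrite <- exp_0; apply exp_increasing; lra).
  replace (sigma * z - d - sigma ^ 2 / 2) with (sigma * z + - d + - (sigma ^ 2 / 2)) by ring.
  replace (b - d) with (b + - d) by ring.
  rewrite !exp_plus.
  replace (exp d) with (/ exp (- d)) by (rewrite exp_Ropp, Rinv_inv; reflexivity).
  replace (exp (- b)) with (/ exp b) by (rewrite exp_Ropp; reflexivity).
  pose proof (exp_pos (- d)). field. lra.
Qed.

Lemma varphi_decr N sigma b d1 d2 : 0 < N -> 0 < sigma -> 0 < d1 -> d1 < d2 -> d2 < b ->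
  varphi N sigma b d2 < varphi N sigma b d1.
Proof.
  intros HN Hs H1 H12 H2.
  pose proof (ncdf_inv_spec _ (qf_range b d1 ltac:(lra))) as E1.
  pose proof (ncdf_inv_spec _ (qf_range b d2 ltac:(lra))) as E2.
  pose proof (qf_decr b d1 d2 ltac:(lra) H12) as Hq.
  assert (Hz : ncdf_inv (qf b d2) < ncdf_inv (qf b d1)).
  { destruct (Rlt_or_le (ncdf_inv (qf b d2)) (ncdf_inv (qf b d1))) as [H|H]; auto.
    apply ncdf_le in H. lra. }
  unfold varphi. apply Rmult_lt_compat_l; auto. apply exp_increasing. nra.
Qed.

Definition BR (N sigma b beta u d : R) : R :=
  if Rle_dec u (Vobj N sigma b (F0 N sigma b beta d) d) then F0 N sigma b beta d else 0.

Lemma F0_range N sigma b beta d : 0 < N -> 0 < beta ->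
  0 < F0 N sigma b beta d <= beta * N.
Proof.
  intros HN Hb. unfold F0. pose proof (varphi_pos N sigma b d HN).
  split; [apply Rmin_glb_lt; nra|apply Rmin_r].
Qed.

Lemma BR_spec N sigma b beta u d : 0 < N -> 0 < sigma -> 0 < beta -> 0 < d < b ->
  vault_best_response N sigma b beta u d (BR N sigma b beta u d).
Proof.
  intros HN Hs Hbeta Hd. unfold BR, vault_best_response, feasible.
  pose proof (F0_range N sigma b beta d HN Hbeta) as HF0.
  destruct (Rle_dec u (Vobj N sigma b (F0 N sigma b beta d) d)) as [Hu|Hu].
  - left. split; [split; [lra|auto]|].
    intros F' [HF' _]. destruct (Req_dec F' (F0 N sigma b beta d)) as [E|E].
    + subst; lra.
    + left; apply vault_opt; auto.
  - right. split; auto. intros F' [HF' Hu'].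
    destruct (Req_dec F' (F0 N sigma b beta d)) as [E|E].
    + subst; lra.
    + pose proof (vault_opt N sigma b beta d F' HN Hs Hbeta Hd HF' E). lra.
Qed.

Lemma BR_unique N sigma b beta u d F : 0 < N -> 0 < sigma -> 0 < beta -> 0 < d < b ->
  vault_best_response N sigma b beta u d F -> F = BR N sigma b beta u d.
Proof.
  intros HN Hs Hbeta Hd H. unfold BR.
  pose proof (F0_range N sigma b beta d HN Hbeta) as HF0.
  destruct H as [[[HF Hu] Hmax] | [Hno HF]].
  - assert (HFe : F = F0 N sigma b beta d).
    { destruct (Req_dec F (F0 N sigma b beta d)) as [E|E]; auto.
      pose proof (vault_opt N sigma b beta d F HN Hs Hbeta Hd HF E).
      assert (feasible N sigma b beta u d (F0 N sigma b beta d)) by (split; [lra|lra]).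
      specialize (Hmax _ H0). lra. }
    subst F. destruct (Rle_dec u _); [reflexivity|lra].
  - destruct (Rle_dec u _) as [Hu|Hu]; auto.
    exfalso. apply (Hno (F0 N sigma b beta d)). split; [lra|auto].
Qed.

Lemma V_at_varphi N sigma b d : 0 < N -> 0 < sigma -> 0 < d < b ->
  Vobj N sigma b (varphi N sigma b d) d =
  N * exp (sigma ^ 2 / 2) + N * ncdf (- d_one N sigma (varphi N sigma b d) d) * (exp b - 1).
Proof.
  intros HN Hs Hd. rewrite Vobj_pos by (apply varphi_pos; auto).
  unfold Vform, Pform. rewrite (d_two_varphi N sigma b d HN Hs).
  rewrite (ncdf_inv_spec _ (qf_range b d Hd)).
  pose proof (qf_alg b d ltac:(lra)) as Ha.
  replace (exp b - exp d) with ((exp b - 1) * exp d * qf b d) by exact Ha. ring.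
Qed.

Theorem theorem1 (N sigma b beta u : R)
  (HN : 0 < N) (Hsigma : 0 < sigma) (Hb : 0 < b) (Hbeta : 0 < beta)
  (Hi : sigma < 2 * npdf 0)
  (Hii : beta < (exp b + 1) / 2 * exp (- b - sigma ^ 2 / 2))
  (delta_beta delta_star : R)
  (Hdb : 0 < delta_beta < b)
  (Hdb_eq : varphi N sigma b delta_beta = beta * N)
  (Hds : delta_th b < delta_star < b)
  (Hds_eq : sigma / npdf (ncdf_inv (qf b delta_star))
              * ((exp b - exp (b - delta_star)) / (exp b - 1)) = 1)
  (Hiii : delta_beta < delta_star)
  (Hiv : u <= N * exp (sigma ^ 2 / 2)
              + N * ncdf (- d_one N sigma (varphi N sigma b delta_star) delta_star)
                  * (exp b - 1)) :
  (exists Fs : R -> R,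
      stackelberg_eq N sigma b beta u delta_star Fs /\
      Fs delta_star = varphi N sigma b delta_star /\
      feasible N sigma b beta u delta_star (Fs delta_star)) /\
  (forall (delta : R) (Fs : R -> R),
      stackelberg_eq N sigma b beta u delta Fs ->
      delta = delta_star /\ Fs delta = varphi N sigma b delta_star /\
      feasible N sigma b beta u delta (Fs delta)) /\
  (forall (delta1 delta2 : R) (Fs1 Fs2 : R -> R),
      stackelberg_eq N sigma b beta u delta1 Fs1 ->
      stackelberg_eq N sigma b beta u delta2 Fs2 ->
      forall d, 0 < d < b -> Fs1 d = Fs2 d).
Proof.
  assert (Hds' : 0 < delta_star < b) by lra.
  set (K := N * exp (- (sigma ^ 2 / 2)) * exp (- b) * (exp b - 1)).
  assert (HB : 1 < exp b) by (rewrite <- exp_0; apply exp_increasing; lra).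
  assert (HK : 0 < K).
  { unfold K. repeat apply Rmult_lt_0_compat; try apply exp_pos; lra. }
  set (zs := ncdf_inv (qf b delta_star)).
  assert (Hm : mfun sigma zs = 0).
  { pose proof (ncdf_inv_spec _ (qf_range b delta_star Hds')) as Hz. fold zs in Hz.
    assert (E : (exp b - exp (b - delta_star)) / (exp b - 1) = 1 - ncdf zs).
    { rewrite Hz. unfold qf. field. lra. }
    rewrite E in Hds_eq. fold zs in Hds_eq. pose proof (npdf_pos zs).
    unfold mfun.
    assert (sigma * (1 - ncdf zs) = npdf zs).
    { apply Rmult_eq_reg_r with (/ npdf zs). 2:{ apply Rinv_neq_0_compat; lra. }
      rewrite Rinv_r by lra. transitivity (sigma / npdf zs * (1 - ncdf zs)); [unfold Rdiv; ring | exact Hds_eq]. }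
    lra. }
  set (Pstar := varphi N sigma b delta_star * (exp delta_star - 1)).
  assert (HPs : Pstar = K * Gz sigma zs) by (unfold Pstar, K, zs; apply payoff_Gz; auto).
  assert (Hvs : varphi N sigma b delta_star < beta * N).
  { rewrite <- Hdb_eq. apply varphi_decr; auto; lra. }
  assert (HF0s : F0 N sigma b beta delta_star = varphi N sigma b delta_star).
  { unfold F0. apply Rmin_left. lra. }
  assert (HBRs : BR N sigma b beta u delta_star = varphi N sigma b delta_star).
  { unfold BR. rewrite HF0s. destruct (Rle_dec u _) as [H|H]; auto.
    exfalso. apply H. rewrite V_at_varphi; auto. }
  assert (Hfeas : feasible N sigma b beta u delta_star (varphi N sigma b delta_star)).
  { split. split; [left; apply varphi_pos; auto|lra]. rewrite V_at_varphi; auto. }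
  assert (HPpos : 0 < Pstar).
  { unfold Pstar. apply Rmult_lt_0_compat. apply varphi_pos; auto.
    assert (1 < exp delta_star) by (rewrite <- exp_0; apply exp_increasing; lra). lra. }
  assert (Hphi : forall d, 0 < d < b -> d <> delta_star ->
            varphi N sigma b d * (exp d - 1) < Pstar).
  { intros d Hd Hne. rewrite payoff_Gz by auto. rewrite HPs.
    apply Rmult_lt_compat_l; auto. apply Gz_unimodal; auto.
    intros E. apply Hne.
    pose proof (ncdf_inv_spec _ (qf_range b d Hd)) as E1.
    pose proof (ncdf_inv_spec _ (qf_range b delta_star Hds')) as E2.
    fold zs in E2. rewrite E in E1. rewrite E1 in E2.
    destruct (Rtotal_order d delta_star) as [H|[H|H]]; auto.
    - pose proof (qf_decr b _ _ Hb H). lra.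
    - pose proof (qf_decr b _ _ Hb H). lra. }
  assert (Hgov : forall d, 0 < d < b -> d <> delta_star ->
            gov_payoff d (BR N sigma b beta u d) < Pstar).
  { intros d Hd Hne. unfold gov_payoff, BR.
    destruct (Rle_dec u _) as [Hu|Hu]; [|lra].
    unfold F0. destruct (Rle_dec (varphi N sigma b d) (beta * N)) as [Hle|Hgt].
    - rewrite Rmin_left by auto. apply Hphi; auto.
    - rewrite Rmin_right by lra.
      assert (Hdlt : d < delta_beta).
      { destruct (Rlt_or_le d delta_beta) as [H|H]; auto.
        destruct (Rle_lt_or_eq_dec _ _ H) as [H'|H'].
        - pose proof (varphi_decr N sigma b delta_beta d HN Hsigma (proj1 Hdb) H' (proj2 Hd)). lra.
        - subst. lra. }
      apply Rlt_trans with (varphi N sigma b delta_beta * (exp delta_beta - 1)).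
      + rewrite Hdb_eq. apply Rmult_lt_compat_l. nra.
        pose proof (exp_increasing _ _ Hdlt). lra.
      + apply Hphi; auto. lra. }
  assert (Hgov_le : forall d, 0 < d < b ->
            gov_payoff d (BR N sigma b beta u d) <= gov_payoff delta_star (BR N sigma b beta u delta_star)).
  { intros d Hd. unfold gov_payoff at 2. rewrite HBRs. fold Pstar.
    destruct (Req_dec d delta_star) as [E|E].
    - subst d. unfold gov_payoff. rewrite HBRs. right; reflexivity.
    - left; apply Hgov; auto. }
  assert (Hst : forall delta Fs, stackelberg_eq N sigma b beta u delta Fs ->
            forall d, 0 < d < b -> Fs d = BR N sigma b beta u d).
  { intros delta Fs [_ [Hv _]] d Hd. apply BR_unique; auto. }
  split; [|split].
  - exists (BR N sigma b beta u). split; [|split].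
    + split; [auto|split].
      * intros d Hd. apply BR_spec; auto.
      * exact Hgov_le.
    + exact HBRs.
    + rewrite HBRs. exact Hfeas.
  - intros delta Fs Heq.
    pose proof (Hst _ _ Heq) as HF.
    destruct Heq as [Hd [_ Hopt]].
    assert (Hdd : delta = delta_star).
    { destruct (Req_dec delta delta_star) as [E|E]; auto. exfalso.
      specialize (Hopt delta_star Hds'). rewrite !HF in Hopt by auto.
      unfold gov_payoff at 1 in Hopt. rewrite HBRs in Hopt. fold Pstar in Hopt.
      pose proof (Hgov delta Hd E). lra. }
    subst delta. rewrite HF by auto. rewrite HBRs. split; auto.
  - intros delta1 delta2 Fs1 Fs2 H1 H2 d Hd.
    rewrite (Hst _ _ H1 d Hd), (Hst _ _ H2 d Hd). reflexivity.
Qed.
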